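(* Let $G=\mathrm{SL}_3(\mathbb{R})$, $U=U_3(\mathbb{R})$, $\Gamma=\mathrm{SL}_3(\mathbb{Z})$ acting on $G/U$ by left multiplication. Then: (1) if $g\in P_+$, the stabilizer of $gU$ in $\Gamma$ is $H_3(\mathbb{Z})$; (2) if $g\in P_{i,+}\setminus\Gamma P$ for $i\in\{1,2\}$, the stabilizer of $gU$ is $\Gamma_i$; (3) if $g\in G\setminus(\Gamma P_1\cup\Gamma P_2)$, the stabilizer of $gU$ is trivial.
   Context: $U_3(\mathbb{R})$: unipotent upper triangular matrices. $P$: upper triangular matrices in $G$; $P_+\subset P$: those with positive diagonal entries. $P_1$: matrices in $G$ with $g_{31}=g_{32}=0$; $P_{1,+}\subset P_1$: those with $g_{33}>0$. $P_2$: matrices in $G$ with $g_{21}=g_{31}=0$; $P_{2,+}\subset P_2$: those with $g_{11}>0$. $H_3(\mathbb{Z})=\Gamma\cap U$ (integer unipotent upper triangular matrices); $\Gamma_1=\{I+aE_{13}+bE_{23}: a,b\in\mathbb{Z}\}$; $\Gamma_2=\{I+aE_{12}+bE_{13}: a,b\in\mathbb{Z}\}$, with $E_{ij}$ matrix units. *)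

(* Defs.v *)
From HB Require Import structures.
From mathcomp Require Import all_boot all_order all_algebra.
From mathcomp Require Import reals.
Set Implicit Arguments. Unset Strict Implicit. Unset Printing Implicit Defensive.
Import Order.TTheory GRing.Theory Num.Theory.
Local Open Scope ring_scope.

(* 0-based indices: i0,i1,i2 correspond to the paper's indices 1,2,3 *)
Definition i0 : 'I_3 := @Ordinal 3 0 isT.
Definition i1 : 'I_3 := @Ordinal 3 1 isT.
Definition i2 : 'I_3 := @Ordinal 3 2 isT.

Section Defs.
Variable R : realType.

Definition inSL3 (g : 'M[R]_3) : Prop := \det g = 1.

Definition inU (u : 'M[R]_3) : Prop :=
  (forall i j : 'I_3, (j < i)%N -> u i j = 0) /\ (forall i : 'I_3, u i i = 1).

Definition is_intR (x : R) : Prop := exists z : int, x = z%:~R.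

Definition inGamma (g : 'M[R]_3) : Prop :=
  inSL3 g /\ (forall i j : 'I_3, is_intR (g i j)).

Definition inP (g : 'M[R]_3) : Prop :=
  inSL3 g /\ (forall i j : 'I_3, (j < i)%N -> g i j = 0).
Definition inPplus (g : 'M[R]_3) : Prop :=
  inP g /\ (forall i : 'I_3, 0 < g i i).

Definition inP1 (g : 'M[R]_3) : Prop :=
  inSL3 g /\ g i2 i0 = 0 /\ g i2 i1 = 0.
Definition inP1plus (g : 'M[R]_3) : Prop := inP1 g /\ 0 < g i2 i2.

Definition inP2 (g : 'M[R]_3) : Prop :=
  inSL3 g /\ g i1 i0 = 0 /\ g i2 i0 = 0.
Definition inP2plus (g : 'M[R]_3) : Prop := inP2 g /\ 0 < g i0 i0.

Definition inGammaTimes (S : 'M[R]_3 -> Prop) (g : 'M[R]_3) : Prop :=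
  exists gam s, inGamma gam /\ S s /\ g = gam *m s.

Definition inH3Z (g : 'M[R]_3) : Prop := inGamma g /\ inU g.

Definition inGamma1 (g : 'M[R]_3) : Prop :=
  exists a b : int, g = 1%:M + a%:~R *: delta_mx i0 i2 + b%:~R *: delta_mx i1 i2.
Definition inGamma2 (g : 'M[R]_3) : Prop :=
  exists a b : int, g = 1%:M + a%:~R *: delta_mx i0 i1 + b%:~R *: delta_mx i0 i2.

Definition inStab (g gam : 'M[R]_3) : Prop :=
  inGamma gam /\ exists u, inU u /\ gam *m g = g *m u.

End Defs.

(* Main.v *)
Require Import Defs.
From HB Require Import structures.
From mathcomp Require Import all_boot all_order all_algebra.
From mathcomp Require Import reals ring lra zify.
Set Implicit Arguments. Unset Strict Implicit. Unset Printing Implicit Defensive.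
Import Order.TTheory GRing.Theory Num.Theory.
Local Open Scope ring_scope.


Lemma ent_nat (T : Type) m n (A : 'M[T]_(m.+1,n.+1)) :
  exists B : nat -> nat -> T, forall i j, A i j = B i j.
Proof. exists (fun i j => A (inord i) (inord j)) => i j; by rewrite !inord_val. Qed.

Lemma det2 (R : comNzRingType) (A : 'M[R]_2) :
  \det A = A ord0 ord0 * A ord_max ord_max - A ord0 ord_max * A ord_max ord0.
Proof.
rewrite (expand_det_row _ ord0) !big_ord_recl big_ord0 /cofactor !det_mx11 !mxE /=.
have [B AE] := @ent_nat _ _ _ A; rewrite !AE /=.
rewrite !expr0 /= !mul1r. rewrite expr1. ring.
Qed.

Lemma det3 (R : comNzRingType) (A : 'M[R]_3) : \det A =
  A i0 i0 * (A i1 i1 * A i2 i2 - A i1 i2 * A i2 i1)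
  - A i0 i1 * (A i1 i0 * A i2 i2 - A i1 i2 * A i2 i0)
  + A i0 i2 * (A i1 i0 * A i2 i1 - A i1 i1 * A i2 i0).
Proof.
rewrite (expand_det_row _ ord0) !big_ord_recl big_ord0 /cofactor !det2 !mxE /=.
have [B AE] := @ent_nat _ _ _ A; rewrite !AE /=.
rewrite /bump /= ?addn0 ?add0n (_ : (1+1 = 2)%N) //.
rewrite expr0 mul1r sqrrN expr1n; ring.
Qed.

Lemma ord3P (i : 'I_3) : i = i0 \/ i = i1 \/ i = i2.
Proof.
case: i => [[|[|[|m]]] Hm].
- by left; apply: val_inj.
- by right; left; apply: val_inj.
- by right; right; apply: val_inj.
- by [].
Qed.

Lemma mul3E (R : pzSemiRingType) (A B : 'M[R]_3) i j :
  (A *m B) i j = A i i0 * B i0 j + A i i1 * B i1 j + A i i2 * B i2 j.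
Proof.
rewrite mxE !big_ord_recl big_ord0 addr0 addrA.
have -> : lift ord0 ord0 = i1 :> 'I_3 by apply: val_inj.
have -> : lift ord0 (lift ord0 ord0) = i2 :> 'I_3 by apply: val_inj.
have -> : ord0 = i0 :> 'I_3 by apply: val_inj.
by [].
Qed.

Definition mx3 (R : pzRingType) (a b c d e f g h k : R) : 'M[R]_3 :=
  \matrix_(i, j) nth 0 (nth [::] [:: [:: a; b; c]; [:: d; e; f]; [:: g; h; k]] i) j.

Lemma mx3_ext (R : Type) (A B : 'M[R]_3) :
  A i0 i0 = B i0 i0 -> A i0 i1 = B i0 i1 -> A i0 i2 = B i0 i2 ->
  A i1 i0 = B i1 i0 -> A i1 i1 = B i1 i1 -> A i1 i2 = B i1 i2 ->
  A i2 i0 = B i2 i0 -> A i2 i1 = B i2 i1 -> A i2 i2 = B i2 i2 -> A = B.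
Proof.
move=> *; apply/matrixP => i j.
by case: (ord3P i) => [->|[->|->]]; case: (ord3P j) => [->|[->|->]].
Qed.



Lemma col_complete n (q : 'cV[int]_n.+1) :
  exists (M : 'M[int]_n.+1) (c : int), \det M = 1 /\ q = c *: col 0 M.
Proof.
have [L uL [Rm uR [d _ E]]] := int_Smith_normal_form q.
have Hq : q = (d`_0 * Rm 0 0) *: col 0 L.
  apply/matrixP => i j; rewrite (ord1 j) E !mxE big_ord1 !mxE big_ord_recl big1.
    by rewrite !mxE /= mulr1n addr0; ring.
  by move=> k _; rewrite !mxE /= mulr0n mulr0.
move: uL; rewrite unitmxE unfold_in /= => /orP [/eqP D1|/eqP Dm1].
  by exists L, (d`_0 * Rm 0 0).
pose D : 'rV[int]_n.+1 := \row_j (if j == 0 then -1 else 1).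
exists (L *m diag_mx D), (- (d`_0 * Rm 0 0)); split.
  rewrite det_mulmx det_diag big_ord_recl big1 ?Dm1 ?mxE /=; first by ring.
  by move=> k _; rewrite mxE.
rewrite Hq; apply/matrixP => i j; rewrite !mxE big_ord_recl big1.
  by rewrite !mxE /= addr0; ring.
by move=> k _; rewrite !mxE /= mulr0n mulr0.
Qed.

Lemma complete3 (x : 'I_3 -> int) :
  exists (M : 'M[int]_3) (c : int), \det M = 1 /\ forall i, x i = c * M i i0.
Proof.
have [M [c [D E]]] := col_complete (\col_i x i).
exists M, c; split => // i.
have := congr1 (fun A : 'M[int]_(3,1) => A i 0) E; rewrite !mxE => ->.
by have -> : (0 : 'I_3) = i0 by apply: val_inj.
Qed.

Lemma complete2 (x y : int) : exists m00 m01 m10 m11 c : int,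
  m00 * m11 - m01 * m10 = 1 /\ x = c * m00 /\ y = c * m10.
Proof.
have [M [c [D E]]] := col_complete (\col_(i < 2) (if i == ord0 then x else y)).
exists (M ord0 ord0), (M ord0 ord_max), (M ord_max ord0), (M ord_max ord_max), c.
split; first by rewrite -D det2.
split.
  by have := congr1 (fun A : 'M[int]_(2,1) => A ord0 0) E; rewrite !mxE /=.
by have := congr1 (fun A : 'M[int]_(2,1) => A ord_max 0) E; rewrite !mxE /=.
Qed.



Lemma is_int_intr (R : realType) (z : int) : is_intR (z%:~R : R).
Proof. by exists z. Qed.

Lemma is_intE (R : realType) (x : R) : is_intR x -> x = (Num.floor x)%:~R.
Proof. by case=> z ->; rewrite intrKfloor. Qed.

Lemma is_intB (R : realType) (x y : R) : is_intR x -> is_intR y -> is_intR (x - y).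
Proof. by case=> a -> [b ->]; exists (a - b); rewrite intrB. Qed.

Lemma is_intD (R : realType) (x y : R) : is_intR x -> is_intR y -> is_intR (x + y).
Proof. by case=> a -> [b ->]; exists (a + b); rewrite intrD. Qed.

Lemma is_intM (R : realType) (x y : R) : is_intR x -> is_intR y -> is_intR (x * y).
Proof. by case=> a -> [b ->]; exists (a * b); rewrite intrM. Qed.

Lemma is_int0 (R : realType) : is_intR (0 : R).
Proof. by exists 0. Qed.
Lemma is_int1 (R : realType) : is_intR (1 : R).
Proof. by exists 1. Qed.

Definition intmx (R : realType) (A : 'M[R]_3) := forall i j, is_intR (A i j).

Lemma intmxB (R : realType) (A B : 'M[R]_3) : intmx A -> intmx B -> intmx (A - B).
Proof. by move=> HA HB i j; rewrite !mxE; apply: is_intB. Qed.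

Lemma intmxM (R : realType) (A B : 'M[R]_3) : intmx A -> intmx B -> intmx (A *m B).
Proof.
by move=> HA HB i j; rewrite mul3E; repeat apply: is_intD; apply: is_intM.
Qed.

Lemma intmx1 (R : realType) : intmx (1%:M : 'M[R]_3).
Proof. by move=> i j; rewrite !mxE; case: (i == j); [apply: is_int1|apply: is_int0]. Qed.

Lemma intmx_map (R : realType) (M : 'M[int]_3) : intmx (map_mx (intr : int -> R) M).
Proof. by move=> i j; rewrite mxE; apply: is_int_intr. Qed.

Lemma nz_entry (R : realType) (K : 'M[R]_3) : K != 0 -> exists i j, K i j != 0.
Proof.
move=> Knz.
case: (pickP (fun p : 'I_3 * 'I_3 => K p.1 p.2 != 0)) => [[i j] H|H].
  by exists i, j.
move/eqP: Knz; case; apply/matrixP => i j; rewrite mxE.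
by move: (H (i, j)) => /negbFE /eqP.
Qed.

Lemma rank1 (R : realType) (K : 'M[R]_3) (v w : 'I_3 -> R) :
  intmx K -> (forall i j, K i j = v i * w j) -> (exists i j, K i j != 0) ->
  (exists (x : 'I_3 -> int) (l : R), forall i, v i = l * (x i)%:~R) /\
  (exists (y : 'I_3 -> int) (l : R), forall j, w j = l * (y j)%:~R).
Proof.
move=> HK E [i [j Hij]].
have vi : v i != 0 by apply: contraNneq Hij; rewrite E => ->; rewrite mul0r.
have wj : w j != 0 by apply: contraNneq Hij; rewrite E => ->; rewrite mulr0.
split.
  exists (fun k => Num.floor (K k j)), (w j)^-1 => k.
  by rewrite -is_intE // E [v k * _]mulrC mulrA mulVf // mul1r.
exists (fun k => Num.floor (K i k)), (v i)^-1 => k.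
by rewrite -is_intE // E mulrA mulVf // mul1r.
Qed.



Lemma adj_inv (R : comNzRingType) (M : 'M[R]_3) : \det M = 1 ->
  M *m \adj M = 1%:M /\ \adj M *m M = 1%:M /\ \det (\adj M) = 1.
Proof.
move=> D; rewrite mul_mx_adj mul_adj_mx D; split=> //; split=> //.
have := congr1 determinant (mul_mx_adj M).
by rewrite det_mulmx D mul1r det_scalar expr1n => ->.
Qed.

Lemma gam_pair (R : realType) (M : 'M[int]_3) : \det M = 1 ->
  let B := map_mx (intr : int -> R) M in let A := map_mx (intr : int -> R) (\adj M) in
  [/\ B *m A = 1%:M, A *m B = 1%:M, inGamma B, inGamma A & \det A = 1].
Proof.
move=> D B A; have [H1 [H2 H3]] := adj_inv D.
have dm : forall N : 'M[int]_3, \det (map_mx (intr : int -> R) N) = (\det N)%:~R.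
  by move=> N; rewrite (det_map_mx (intr : {rmorphism int -> R})).
split.
- by rewrite /A /B -map_mxM H1 map_mx1.
- by rewrite /A /B -map_mxM H2 map_mx1.
- by split; [rewrite /inSL3 dm D | apply: intmx_map].
- by split; [rewrite /inSL3 dm H3 | apply: intmx_map].
- by rewrite dm H3.
Qed.

Lemma id3E (R : pzRingType) :
  [/\ (1%:M : 'M[R]_3) i0 i0 = 1, (1%:M : 'M[R]_3) i1 i1 = 1, (1%:M : 'M[R]_3) i2 i2 = 1,
      (1%:M : 'M[R]_3) i1 i0 = 0 & (1%:M : 'M[R]_3) i2 i0 = 0] /\
  [/\ (1%:M : 'M[R]_3) i0 i1 = 0, (1%:M : 'M[R]_3) i0 i2 = 0,
      (1%:M : 'M[R]_3) i1 i2 = 0 & (1%:M : 'M[R]_3) i2 i1 = 0].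
Proof. by rewrite !mxE. Qed.

Lemma id_mx3 (R : pzRingType) : (1%:M : 'M[R]_3) = mx3 1 0 0 0 1 0 0 0 1.
Proof. by apply: mx3_ext; rewrite !mxE. Qed.

Lemma GP2_of_col (R : realType) (g : 'M[R]_3) (x : 'I_3 -> int) (l : R) :
  \det g = 1 -> (forall i, g i i0 = l * (x i)%:~R) -> inGammaTimes (@inP2 R) g.
Proof.
move=> Dg Hg.
have [M [c [D Hx]]] := complete3 x.
have [HBA HAB GB GA DA] := gam_pair R D.
set B := map_mx _ M in HBA HAB GB GA DA *.
set A := map_mx _ (\adj M) in HBA HAB GB GA DA *.
have HgB : forall i, g i i0 = (l * c%:~R) * B i i0.
  by move=> i; rewrite Hg Hx /B mxE intrM mulrA.
have [[_ _ _ I10 I20] [I01 I02 I12 I21]] := id3E R.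
exists B, (A *m g); split => //; split; last by rewrite mulmxA HBA mul1mx.
split; first by rewrite /inSL3 det_mulmx DA Dg mulr1.
split.
- rewrite mul3E !HgB; have := congr1 (fun N : 'M[R]_3 => N i1 i0) HAB.
  rewrite mul3E I10 => H.
  transitivity (l * c%:~R * (A i1 i0 * B i0 i0 + A i1 i1 * B i1 i0 + A i1 i2 * B i2 i0)); first by ring.
  by rewrite H mulr0.
- rewrite mul3E !HgB; have := congr1 (fun N : 'M[R]_3 => N i2 i0) HAB.
  rewrite mul3E I20 => H.
  transitivity (l * c%:~R * (A i2 i0 * B i0 i0 + A i2 i1 * B i1 i0 + A i2 i2 * B i2 i0)); first by ring.
  by rewrite H mulr0.
Qed.


Lemma GP1_of_row (R : realType) (g gi : 'M[R]_3) (y : 'I_3 -> int) (l : R) :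
  \det g = 1 -> gi *m g = 1%:M -> (forall j, gi i2 j = l * (y j)%:~R) ->
  inGammaTimes (@inP1 R) g.
Proof.
move=> Dg Hgi Hg.
have [M [c [D Hy]]] := complete3 y.
pose W := mx3 (M i0 i1) (M i1 i1) (M i2 i1) (M i0 i2) (M i1 i2) (M i2 i2)
              (M i0 i0) (M i1 i0) (M i2 i0).
have DW : \det W = 1 by rewrite -D !det3 /W !mxE /=; ring.
have [HBA HAB GB GA DA] := gam_pair R DW.
set B := map_mx _ W in HBA HAB GB GA DA *.
set A := map_mx _ (\adj W) in HBA HAB GB GA DA *.
have [[_ _ I22 _ _] [_ _ _ I21]] := id3E R.
have I20 : (1%:M : 'M[R]_3) i2 i0 = 0 by rewrite !mxE.
have key : forall j, gi i2 j = l * c%:~R * B i2 j.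
  by move=> j; case: (ord3P j) => [->|[->|->]]; rewrite Hg Hy /B !mxE /= intrM mulrA.
have E : forall j, (gi *m g) i2 j = l * c%:~R * (B *m g) i2 j.
  by move=> j; rewrite !mul3E !key; ring.
exists A, (B *m g); split => //; split; last by rewrite mulmxA HAB mul1mx.
split; first by rewrite /inSL3 det_mulmx Dg mulr1; have [] := GB.
have E2 := E i2; rewrite Hgi I22 in E2.
have nz : l * c%:~R != 0 by apply/eqP => H; rewrite H mul0r in E2; move/eqP: E2; rewrite oner_eq0.
split.
- have := E i0; rewrite Hgi I20 => /esym /eqP; rewrite mulf_eq0 (negbTE nz) /= => /eqP.
  done.
- have := E i1; rewrite Hgi I21 => /esym /eqP; rewrite mulf_eq0 (negbTE nz) /= => /eqP.
  done.
Qed.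

Lemma adj_eq (R : comNzRingType) (E Ei : 'M[R]_3) : \det E = 1 -> E *m Ei = 1%:M -> \adj E = Ei.
Proof.
move=> D H; have [_ [H2 _]] := adj_inv D.
by rewrite -[\adj E]mulmx1 -H mulmxA H2 mul1mx.
Qed.

Lemma inP_of (R : realType) (s : 'M[R]_3) : \det s = 1 ->
  s i1 i0 = 0 -> s i2 i0 = 0 -> s i2 i1 = 0 -> inP s.
Proof.
move=> D H10 H20 H21; split => // i j.
by case: (ord3P i) => [->|[->|->]]; case: (ord3P j) => [->|[->|->]].
Qed.

Lemma GP_of_colP1 (R : realType) (g : 'M[R]_3) (x : 'I_3 -> int) (l : R) :
  \det g = 1 -> g i2 i0 = 0 -> g i2 i1 = 0 ->
  g i0 i0 = l * (x i0)%:~R -> g i1 i0 = l * (x i1)%:~R -> inGammaTimes (@inP R) g.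
Proof.
move=> Dg g20 g21 Hg0 Hg1.
have [m00 [m01 [m10 [m11 [c [Dm [Hx0 Hx1]]]]]]] := complete2 (x i0) (x i1).
pose E := mx3 m00 m01 0 m10 m11 0 0 0 1.
pose Ei := mx3 m11 (-m01) 0 (-m10) m00 0 0 0 1.
have DE : \det E = 1.
  by rewrite det3 /E !mxE /=; apply: (etrans _ Dm); ring.
have HE : E *m Ei = 1%:M.
  { rewrite id_mx3; apply: mx3_ext; rewrite mul3E /E /Ei !mxE /=.
    all: try ring. all: rewrite -Dm; ring. }
have [HBA HAB GB GA DA] := gam_pair R DE.
rewrite (adj_eq DE HE) in HBA HAB GB GA DA.
set B := map_mx _ E in HBA HAB GB GA DA *.
set A := map_mx _ Ei in HBA HAB GB GA DA *.
exists B, (A *m g); split => //; split; last by rewrite mulmxA HBA mul1mx.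
apply: inP_of; first by rewrite det_mulmx DA Dg mulr1.
- by rewrite mul3E Hg0 Hg1 g20 Hx0 Hx1 /A !mxE /= !intrM; ring.
- by rewrite mul3E Hg0 Hg1 g20 /A !mxE /=; ring.
- by rewrite mul3E g21 /A !mxE /=; ring.
Qed.

Lemma GP_of_rowP2 (R : realType) (g gi : 'M[R]_3) (y : 'I_3 -> int) (l : R) :
  \det g = 1 -> gi *m g = 1%:M -> g i1 i0 = 0 -> g i2 i0 = 0 -> gi i2 i0 = 0 ->
  gi i2 i1 = l * (y i1)%:~R -> gi i2 i2 = l * (y i2)%:~R -> inGammaTimes (@inP R) g.
Proof.
move=> Dg Hgi g10 g20 gi20 Hy1 Hy2.
have [m00 [m01 [m10 [m11 [c [Dm [Hx0 Hx1]]]]]]] := complete2 (y i1) (y i2).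
pose E := mx3 1 0 0 0 (-m01) (-m11) 0 m00 m10.
pose Ei := mx3 1 0 0 0 m10 m11 0 (-m00) (-m01).
have DE : \det E = 1.
  { rewrite det3 /E !mxE /=; transitivity (m00 * m11 - m01 * m10); [ring | exact: Dm]. }
have HE : E *m Ei = 1%:M.
  { rewrite id_mx3; apply: mx3_ext; rewrite mul3E /E /Ei !mxE /=.
    all: try ring. all: rewrite -Dm; ring. }
have [HBA HAB GB GA DA] := gam_pair R DE.
rewrite (adj_eq DE HE) in HBA HAB GB GA DA.
set B := map_mx _ E in HBA HAB GB GA DA *.
set A := map_mx _ Ei in HBA HAB GB GA DA *.
have [[_ _ I22 _ _] [_ _ _ I21]] := id3E R.
have E21 := congr1 (fun N : 'M[R]_3 => N i2 i1) Hgi.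
have E22 := congr1 (fun N : 'M[R]_3 => N i2 i2) Hgi.
rewrite /= I21 mul3E gi20 Hy1 Hy2 Hx0 Hx1 !intrM in E21.
rewrite /= I22 mul3E gi20 Hy1 Hy2 Hx0 Hx1 !intrM in E22.
have E21' : l * c%:~R * (m00%:~R * g i1 i1 + m10%:~R * g i2 i1) = 0 by apply: (etrans _ E21); ring.
have E22' : l * c%:~R * (m00%:~R * g i1 i2 + m10%:~R * g i2 i2) = 1 by apply: (etrans _ E22); ring.
have nz : l * c%:~R != 0.
  by apply/eqP => H; move: E22'; rewrite H mul0r => /eqP; rewrite eq_sym oner_eq0.
exists A, (B *m g); split => //; split; last by rewrite mulmxA HAB mul1mx.
apply: inP_of; first by rewrite det_mulmx Dg mulr1; case: GB.
- by rewrite mul3E g10 g20 /B !mxE /=; ring.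
- by rewrite mul3E g10 g20 /B !mxE /=; ring.
- rewrite mul3E /B !mxE /=.
  move/eqP: E21'; rewrite mulf_eq0 (negbTE nz) /= => /eqP <-; ring.
Qed.



Lemma U_entries (R : realType) (u : 'M[R]_3) : inU u ->
  [/\ u i1 i0 = 0, u i2 i0 = 0, u i2 i1 = 0 & [/\ u i0 i0 = 1, u i1 i1 = 1 & u i2 i2 = 1]].
Proof. by case=> H1 H2; split; [apply: H1|apply: H1|apply: H1|split; apply: H2]. Qed.

Lemma Kform (R : realType) (g gi u : 'M[R]_3) : inU u -> forall i j,
  (g *m (u - 1%:M) *m gi) i j =
  g i i0 * (u i0 i1 * gi i1 j + u i0 i2 * gi i2 j) + g i i1 * u i1 i2 * gi i2 j.
Proof.
move=> /U_entries [u10 u20 u21 [u00 u11 u22]] i j.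
rewrite !mul3E !mxE /= u10 u20 u21 u00 u11 u22; ring.
Qed.

Lemma K2form (R : realType) (g gi u : 'M[R]_3) : gi *m g = 1%:M -> inU u -> forall i j,
  ((g *m (u - 1%:M) *m gi) *m (g *m (u - 1%:M) *m gi)) i j =
  g i i0 * (u i0 i1 * u i1 i2) * gi i2 j.
Proof.
move=> Hgi Hu i j.
have -> : (g *m (u - 1%:M) *m gi) *m (g *m (u - 1%:M) *m gi) =
          g *m ((u - 1%:M) *m (u - 1%:M)) *m gi.
  by rewrite !mulmxA -[g *m (u - 1%:M) *m gi *m g](mulmxA) Hgi mulmx1.
move: Hu => /U_entries [u10 u20 u21 [u00 u11 u22]].
rewrite !mul3E !mxE /= u10 u20 u21 u00 u11 u22; ring.
Qed.

Lemma conj_nz (R : realType) (g gi X : 'M[R]_3) : gi *m g = 1%:M ->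
  g *m X *m gi = 0 -> X = 0.
Proof.
move=> H E; have := congr1 (fun Y => gi *m Y *m g) E.
by rewrite /= !mulmxA H mul1mx -mulmxA H mulmx1 mulmx0 mul0mx.
Qed.

Lemma Kdef (R : realType) (g gi gam u : 'M[R]_3) : g *m gi = 1%:M ->
  gam *m g = g *m u -> gam - 1%:M = g *m (u - 1%:M) *m gi.
Proof.
move=> H E; rewrite mulmxBr mulmx1 mulmxBl H -E -mulmxA H mulmx1. by [].
Qed.



Lemma cancel0 (R : realType) (a y : R) : a != 0 -> a * y = 0 -> y = 0.
Proof. by move=> a0 /eqP; rewrite mulf_eq0 (negbTE a0) => /eqP. Qed.

Lemma cancel1 (R : realType) (a y : R) : a != 0 -> a * y = a -> y = 1.
Proof. by move=> a0 H; apply: (mulfI a0); rewrite H mulr1. Qed.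

Lemma tri_dir (R : realType) (g x y : 'M[R]_3) :
  g i1 i0 = 0 -> g i2 i0 = 0 -> g i2 i1 = 0 ->
  g i0 i0 != 0 -> g i1 i1 != 0 -> g i2 i2 != 0 ->
  x *m g = g *m y -> inU x -> inU y.
Proof.
move=> g10 g20 g21 n0 n1 n2 E /U_entries [x10 x20 x21 [x00 x11 x22]].
have e : forall i j, (x *m g) i j = (g *m y) i j by move=> i j; rewrite E.
have y20 : y i2 i0 = 0.
  apply: (cancel0 n2); move: (e i2 i0); rewrite !mul3E ?x20 ?x21 ?x22 ?g10 ?g20 ?g21 => H; lra.
have y21 : y i2 i1 = 0.
  apply: (cancel0 n2); move: (e i2 i1); rewrite !mul3E ?x20 ?x21 ?x22 ?g10 ?g20 ?g21 => H; lra.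
have y10 : y i1 i0 = 0.
  apply: (cancel0 n1); move: (e i1 i0); rewrite !mul3E ?x10 ?x11 ?x20 ?x21 ?x22 ?g10 ?g20 ?g21 ?y20 => H; lra.
have y22 : y i2 i2 = 1.
  apply: (cancel1 n2); move: (e i2 i2); rewrite !mul3E ?x20 ?x21 ?x22 ?g10 ?g20 ?g21 => H; lra.
have y11 : y i1 i1 = 1.
  apply: (cancel1 n1); move: (e i1 i1); rewrite !mul3E ?x10 ?x11 ?x20 ?x21 ?x22 ?g10 ?g20 ?g21 ?y21 => H; lra.
have y00 : y i0 i0 = 1.
  apply: (cancel1 n0); move: (e i0 i0); rewrite !mul3E ?x00 ?x10 ?x20 ?g10 ?g20 ?y20 ?y10 => H; lra.
split.
- move=> i j; case: (ord3P i) => [->|[->|->]]; case: (ord3P j) => [->|[->|->]] //.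
- by move=> i; case: (ord3P i) => [->|[->|->]].
Qed.

Lemma tri_inv (R : realType) (g x y : 'M[R]_3) :
  g i1 i0 = 0 -> g i2 i0 = 0 -> g i2 i1 = 0 ->
  g i0 i0 != 0 -> g i1 i1 != 0 -> g i2 i2 != 0 ->
  x *m g = g *m y -> inU y -> inU x.
Proof.
move=> g10 g20 g21 n0 n1 n2 E /U_entries [y10 y20 y21 [y00 y11 y22]].
have e : forall i j, (x *m g) i j = (g *m y) i j by move=> i j; rewrite E.
have x20 : x i2 i0 = 0.
  apply: (cancel0 n0); move: (e i2 i0); rewrite !mul3E ?y10 ?y20 ?g10 ?g20 ?g21 => H; lra.
have x10 : x i1 i0 = 0.
  apply: (cancel0 n0); move: (e i1 i0); rewrite !mul3E ?y10 ?y20 ?g10 ?g20 ?g21 => H; lra.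
have x21 : x i2 i1 = 0.
  apply: (cancel0 n1); move: (e i2 i1); rewrite !mul3E ?x20 ?y21 ?g10 ?g20 ?g21 => H; lra.
have x00 : x i0 i0 = 1.
  apply: (cancel1 n0); move: (e i0 i0); rewrite !mul3E ?y00 ?y10 ?y20 ?g10 ?g20 => H; lra.
have x11 : x i1 i1 = 1.
  apply: (cancel1 n1); move: (e i1 i1); rewrite !mul3E ?x10 ?y11 ?y21 ?g10 ?g20 ?g21 => H; lra.
have x22 : x i2 i2 = 1.
  apply: (cancel1 n2); move: (e i2 i2); rewrite !mul3E ?x20 ?x21 ?y22 ?g20 ?g21 => H; lra.
split.
- move=> i j; case: (ord3P i) => [->|[->|->]]; case: (ord3P j) => [->|[->|->]] //.
- by move=> i; case: (ord3P i) => [->|[->|->]].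
Qed.



Lemma K_nz (R : realType) (g gi gam u : 'M[R]_3) : g *m gi = 1%:M -> gi *m g = 1%:M ->
  gam *m g = g *m u -> (u i0 i1 != 0) || (u i1 i2 != 0) -> gam - 1%:M != 0.
Proof.
move=> H1 H2 E nz; apply/eqP => K0.
rewrite (Kdef H1 E) in K0; have := conj_nz H2 K0 => N0.
have e01 := congr1 (fun N : 'M[R]_3 => N i0 i1) N0.
have e12 := congr1 (fun N : 'M[R]_3 => N i1 i2) N0.
move: e01 e12 nz; rewrite !mxE /= !subr0 => -> ->; by rewrite eqxx.
Qed.

Lemma K2mat (R : realType) (g gi gam u : 'M[R]_3) : g *m gi = 1%:M -> gi *m g = 1%:M ->
  gam *m g = g *m u ->
  (gam - 1%:M) *m (gam - 1%:M) = g *m ((u - 1%:M) *m (u - 1%:M)) *m gi.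
Proof.
move=> H1 H2 E; rewrite (Kdef H1 E).
by rewrite !mulmxA -[g *m (u - 1%:M) *m gi *m g](mulmxA) H2 mulmx1.
Qed.

Lemma K2_nz (R : realType) (g gi gam u : 'M[R]_3) : g *m gi = 1%:M -> gi *m g = 1%:M ->
  gam *m g = g *m u -> inU u -> u i0 i1 * u i1 i2 != 0 ->
  (gam - 1%:M) *m (gam - 1%:M) != 0.
Proof.
move=> H1 H2 E Hu nz; apply/eqP => K0.
rewrite (K2mat H1 H2 E) in K0; have := conj_nz H2 K0 => N0.
have e02 := congr1 (fun N : 'M[R]_3 => N i0 i2) N0.
move: Hu e02 nz => /U_entries [u10 u20 u21 [u00 u11 u22]].
rewrite mul3E !mxE /= ?u00 ?u11 ?u22 ?u10 ?u20 ?u21 => H.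
suff -> : u i0 i1 * u i1 i2 = 0 by rewrite eqxx.
by rewrite -H; ring.
Qed.

Lemma K_ent (R : realType) (g gi gam u : 'M[R]_3) : g *m gi = 1%:M ->
  gam *m g = g *m u -> inU u -> forall i j,
  (gam - 1%:M) i j = g i i0 * (u i0 i1 * gi i1 j + u i0 i2 * gi i2 j) + g i i1 * u i1 i2 * gi i2 j.
Proof. by move=> H1 E Hu i j; rewrite (Kdef H1 E) Kform. Qed.

Lemma K2_ent (R : realType) (g gi gam u : 'M[R]_3) : g *m gi = 1%:M -> gi *m g = 1%:M ->
  gam *m g = g *m u -> inU u -> forall i j,
  ((gam - 1%:M) *m (gam - 1%:M)) i j = g i i0 * (u i0 i1 * u i1 i2) * gi i2 j.
Proof. by move=> H1 H2 E Hu i j; rewrite (Kdef H1 E) K2form. Qed.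

Lemma Kint (R : realType) (gam : 'M[R]_3) : inGamma gam -> intmx (gam - 1%:M).
Proof. by case=> _ H; apply: intmxB => //; apply: intmx1. Qed.

Lemma K2int (R : realType) (gam : 'M[R]_3) : inGamma gam ->
  intmx ((gam - 1%:M) *m (gam - 1%:M)).
Proof. by move=> G; apply: intmxM; apply: Kint. Qed.

Lemma conjX (R : realType) (g gi X : 'M[R]_3) : gi *m g = 1%:M ->
  gi *m (1%:M + X) *m g = 1%:M + gi *m X *m g.
Proof. by move=> H; rewrite mulmxDr mulmx1 mulmxDl H. Qed.



Lemma part1 (R : realType) (g : 'M[R]_3) : inPplus g -> forall gam, inStab g gam <-> inH3Z gam.
Proof.
move=> [[Dg Hlow] Hpos] gam.
have g10 : g i1 i0 = 0 by apply: Hlow.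
have g20 : g i2 i0 = 0 by apply: Hlow.
have g21 : g i2 i1 = 0 by apply: Hlow.
have n0 : g i0 i0 != 0 by rewrite gt_eqF ?Hpos.
have n1 : g i1 i1 != 0 by rewrite gt_eqF ?Hpos.
have n2 : g i2 i2 != 0 by rewrite gt_eqF ?Hpos.
have [H1 [H2 _]] := adj_inv Dg.
split.
- case=> Gg [u [Hu E]]; split => //; exact: (tri_inv g10 g20 g21 n0 n1 n2 E Hu).
- case=> Gg Ug; split => //; exists (\adj g *m gam *m g).
  have E : gam *m g = g *m (\adj g *m gam *m g) by rewrite !mulmxA H1 mul1mx.
  split => //; exact: (tri_dir g10 g20 g21 n0 n1 n2 E Ug).
Qed.

Lemma inGamma1_int (R : realType) (a b : int) :
  inGamma (1%:M + a%:~R *: delta_mx i0 i2 + b%:~R *: delta_mx i1 i2 : 'M[R]_3).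
Proof.
split.
  by rewrite /inSL3 det3 !mxE /=; ring.
move=> i j; rewrite !mxE.
case: (ord3P i) => [->|[->|->]]; case: (ord3P j) => [->|[->|->]] /=;
  rewrite ?mulr0 ?mulr1 ?addr0 ?add0r;
  by [apply: is_int0 | apply: is_int1 | apply: is_int_intr | apply: is_intD; apply: is_int_intr].
Qed.

Lemma part2 (R : realType) (g : 'M[R]_3) : inP1plus g -> ~ inGammaTimes (@inP R) g ->
  forall gam, inStab g gam <-> inGamma1 gam.
Proof.
move=> [[Dg [g20 g21]] g22p] NP gam.
have n2 : g i2 i2 != 0 by rewrite gt_eqF.
have [H1 [H2 _]] := adj_inv Dg.
set gi := \adj g in H1 H2 *.
have gi20 : gi i2 i0 = 0.
  apply: (cancel0 n2); have := congr1 (fun N : 'M[R]_3 => N i2 i0) H1.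
  rewrite /= mul3E g20 g21 !mxE /= => H; lra.
have gi21 : gi i2 i1 = 0.
  apply: (cancel0 n2); have := congr1 (fun N : 'M[R]_3 => N i2 i1) H1.
  rewrite /= mul3E g20 g21 !mxE /= => H; lra.
split.
- case=> Gg [u [Hu E]].
  have Ke := K_ent H1 E Hu.
  case: (eqVneq (u i0 i1) 0) => a0.
  + exists (Num.floor (gam i0 i2)), (Num.floor (gam i1 i2)).
    have k00 : gam i0 i0 = 1 by have := Ke i0 i0; rewrite a0 gi20 !mxE /= => H; lra.
    have k01 : gam i0 i1 = 0 by have := Ke i0 i1; rewrite a0 gi21 !mxE /= => H; lra.
    have k10 : gam i1 i0 = 0 by have := Ke i1 i0; rewrite a0 gi20 !mxE /= => H; lra.
    have k11 : gam i1 i1 = 1 by have := Ke i1 i1; rewrite a0 gi21 !mxE /= => H; lra.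
    have k20 : gam i2 i0 = 0 by have := Ke i2 i0; rewrite g20 g21 !mxE /= => H; lra.
    have k21 : gam i2 i1 = 0 by have := Ke i2 i1; rewrite g20 g21 !mxE /= => H; lra.
    have k22 : gam i2 i2 = 1 by have := Ke i2 i2; rewrite g20 g21 !mxE /= => H; lra.
    have [_ Gi] := Gg.
    have e02 := is_intE (Gi i0 i2); have e12 := is_intE (Gi i1 i2).
    apply: mx3_ext; rewrite !mxE /= ?k00 ?k01 ?k10 ?k11 ?k20 ?k21 ?k22; try ring.
    * by rewrite {1}e02; ring.
    * by rewrite {1}e12; ring.
  + exfalso; apply: NP.
    have [x [l Hx]] : exists (x : 'I_3 -> int) (l : R), forall i, g i i0 = l * (x i)%:~R.
      case: (eqVneq (u i1 i2) 0) => c0.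
      * have KE' : forall i j, (gam - 1%:M) i j =
            g i i0 * (u i0 i1 * gi i1 j + u i0 i2 * gi i2 j).
          by move=> i j; rewrite Ke c0; ring.
        have nz := K_nz H1 H2 E (introT orP (or_introl a0)).
        by have [] := rank1 (Kint Gg) KE' (nz_entry nz).
      * have nz := K2_nz H1 H2 E Hu (mulf_neq0 a0 c0).
        have KE' : forall i j, ((gam - 1%:M) *m (gam - 1%:M)) i j =
            g i i0 * (u i0 i1 * u i1 i2 * gi i2 j).
          by move=> i j; rewrite (K2_ent H1 H2 E Hu); ring.
        by have [] := rank1 (K2int Gg) KE' (nz_entry nz).
    exact: GP_of_colP1 Dg g20 g21 (Hx i0) (Hx i1).
- case=> a [b ->].
  split; first exact: inGamma1_int.
  exists (gi *m (1%:M + a%:~R *: delta_mx i0 i2 + b%:~R *: delta_mx i1 i2) *m g).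
  split; last by rewrite !mulmxA H1 mul1mx.
  rewrite -addrA conjX //.
  set X := (a%:~R *: _ + _).
  have Xe : forall i j, (gi *m X *m g) i j = (gi i i0 * a%:~R + gi i i1 * b%:~R) * g i2 j.
    by move=> i j; rewrite !mul3E /X !mxE /=; ring.
  split.
  + move=> i j; rewrite mxE Xe.
    by case: (ord3P i) => [->|[->|->]]; case: (ord3P j) => [->|[->|->]] //= _;
      rewrite ?g20 ?g21 ?gi20 ?gi21 !mxE /=; ring.
  + move=> i; rewrite mxE Xe.
    by case: (ord3P i) => [->|[->|->]]; rewrite ?g20 ?g21 ?gi20 ?gi21 !mxE /=; ring.
Qed.

Lemma inGamma2_int (R : realType) (a b : int) :
  inGamma (1%:M + a%:~R *: delta_mx i0 i1 + b%:~R *: delta_mx i0 i2 : 'M[R]_3).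
Proof.
split.
  by rewrite /inSL3 det3 !mxE /=; ring.
move=> i j; rewrite !mxE.
case: (ord3P i) => [->|[->|->]]; case: (ord3P j) => [->|[->|->]] /=;
  rewrite ?mulr0 ?mulr1 ?addr0 ?add0r;
  by [apply: is_int0 | apply: is_int1 | apply: is_int_intr | apply: is_intD; apply: is_int_intr].
Qed.

Lemma part3 (R : realType) (g : 'M[R]_3) : inP2plus g -> ~ inGammaTimes (@inP R) g ->
  forall gam, inStab g gam <-> inGamma2 gam.
Proof.
move=> [[Dg [g10 g20]] g00p] NP gam.
have n0 : g i0 i0 != 0 by rewrite gt_eqF.
have [H1 [H2 _]] := adj_inv Dg.
set gi := \adj g in H1 H2 *.
have gi10 : gi i1 i0 = 0.
  apply: (cancel0 n0); have := congr1 (fun N : 'M[R]_3 => N i1 i0) H2.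
  rewrite /= mul3E g10 g20 !mxE /= => H; lra.
have gi20 : gi i2 i0 = 0.
  apply: (cancel0 n0); have := congr1 (fun N : 'M[R]_3 => N i2 i0) H2.
  rewrite /= mul3E g10 g20 !mxE /= => H; lra.
split.
- case=> Gg [u [Hu E]].
  have Ke := K_ent H1 E Hu.
  case: (eqVneq (u i1 i2) 0) => c0.
  + exists (Num.floor (gam i0 i1)), (Num.floor (gam i0 i2)).
    have k00 : gam i0 i0 = 1 by have := Ke i0 i0; rewrite c0 gi10 gi20 !mxE /= => H; lra.
    have k10 : gam i1 i0 = 0 by have := Ke i1 i0; rewrite c0 g10 !mxE /= => H; lra.
    have k11 : gam i1 i1 = 1 by have := Ke i1 i1; rewrite c0 g10 !mxE /= => H; lra.
    have k12 : gam i1 i2 = 0 by have := Ke i1 i2; rewrite c0 g10 !mxE /= => H; lra.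
    have k20 : gam i2 i0 = 0 by have := Ke i2 i0; rewrite c0 g20 !mxE /= => H; lra.
    have k21 : gam i2 i1 = 0 by have := Ke i2 i1; rewrite c0 g20 !mxE /= => H; lra.
    have k22 : gam i2 i2 = 1 by have := Ke i2 i2; rewrite c0 g20 !mxE /= => H; lra.
    have [_ Gi] := Gg.
    have e01 := is_intE (Gi i0 i1); have e02 := is_intE (Gi i0 i2).
    apply: mx3_ext; rewrite !mxE /= ?k00 ?k12 ?k10 ?k11 ?k20 ?k21 ?k22; try ring.
    * by rewrite {1}e01; ring.
    * by rewrite {1}e02; ring.
  + exfalso; apply: NP.
    have [y [l Hy]] : exists (y : 'I_3 -> int) (l : R), forall j, gi i2 j = l * (y j)%:~R.
      case: (eqVneq (u i0 i1) 0) => a0.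
      * have KE' : forall i j, (gam - 1%:M) i j =
            (g i i0 * u i0 i2 + g i i1 * u i1 i2) * gi i2 j.
          by move=> i j; rewrite Ke a0; ring.
        have nz := K_nz H1 H2 E (introT orP (or_intror c0)).
        by have [] := rank1 (Kint Gg) KE' (nz_entry nz).
      * have nz := K2_nz H1 H2 E Hu (mulf_neq0 a0 c0).
        have KE' : forall i j, ((gam - 1%:M) *m (gam - 1%:M)) i j =
            (g i i0 * (u i0 i1 * u i1 i2)) * gi i2 j.
          by move=> i j; rewrite (K2_ent H1 H2 E Hu).
        by have [] := rank1 (K2int Gg) KE' (nz_entry nz).
    exact: GP_of_rowP2 Dg H2 g10 g20 gi20 (Hy i1) (Hy i2).
- case=> a [b ->].
  split; first exact: inGamma2_int.
  exists (gi *m (1%:M + a%:~R *: delta_mx i0 i1 + b%:~R *: delta_mx i0 i2) *m g).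
  split; last by rewrite !mulmxA H1 mul1mx.
  rewrite -addrA conjX //.
  set X := (a%:~R *: _ + _).
  have Xe : forall i j, (gi *m X *m g) i j = gi i i0 * (a%:~R * g i1 j + b%:~R * g i2 j).
    by move=> i j; rewrite !mul3E /X !mxE /=; ring.
  split.
  + move=> i j; rewrite mxE Xe.
    by case: (ord3P i) => [->|[->|->]]; case: (ord3P j) => [->|[->|->]] //= _;
      rewrite ?g10 ?g20 ?gi10 ?gi20 !mxE /=; ring.
  + move=> i; rewrite mxE Xe.
    by case: (ord3P i) => [->|[->|->]]; rewrite ?g10 ?g20 ?gi10 ?gi20 !mxE /=; ring.
Qed.

Lemma part4 (R : realType) (g : 'M[R]_3) : inSL3 g ->
  ~ inGammaTimes (@inP1 R) g -> ~ inGammaTimes (@inP2 R) g ->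
  forall gam, inStab g gam <-> gam = 1%:M.
Proof.
move=> Dg NP1 NP2 gam.
have [H1 [H2 _]] := adj_inv Dg.
set gi := \adj g in H1 H2 *.
split.
- case=> Gg [u [Hu E]].
  case: (eqVneq gam 1%:M) => // g1; exfalso.
  have Knz : gam - 1%:M != 0 by rewrite subr_eq0.
  have Ke := K_ent H1 E Hu.
  case: (eqVneq (u i1 i2) 0) => c0.
  + apply: NP2.
    have KE' : forall i j, (gam - 1%:M) i j =
        g i i0 * (u i0 i1 * gi i1 j + u i0 i2 * gi i2 j).
      by move=> i j; rewrite Ke c0; ring.
    have [[x [l Hx]] _] := rank1 (Kint Gg) KE' (nz_entry Knz).
    exact: GP2_of_col Dg Hx.
  case: (eqVneq (u i0 i1) 0) => a0.
  + apply: NP1.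
    have KE' : forall i j, (gam - 1%:M) i j =
        (g i i0 * u i0 i2 + g i i1 * u i1 i2) * gi i2 j.
      by move=> i j; rewrite Ke a0; ring.
    have [_ [y [l Hy]]] := rank1 (Kint Gg) KE' (nz_entry Knz).
    exact: GP1_of_row Dg H2 Hy.
  + apply: NP2.
    have nz := K2_nz H1 H2 E Hu (mulf_neq0 a0 c0).
    have KE' : forall i j, ((gam - 1%:M) *m (gam - 1%:M)) i j =
        g i i0 * (u i0 i1 * u i1 i2 * gi i2 j).
      by move=> i j; rewrite (K2_ent H1 H2 E Hu); ring.
    have [[x [l Hx]] _] := rank1 (K2int Gg) KE' (nz_entry nz).
    exact: GP2_of_col Dg Hx.
- move=> ->; split.
  + split; first by rewrite /inSL3 det1.
    exact: intmx1.
  + exists 1%:M; split; last by rewrite mul1mx mulmx1.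
    by split => [i j lt|i]; rewrite !mxE //; case: eqP => // E; rewrite E ltnn in lt.
Qed.


Theorem lemma5p17 (R : realType) :
  (forall g : 'M[R]_3, inPplus g ->
     forall gam, inStab g gam <-> inH3Z gam) /\
  (forall g : 'M[R]_3, inP1plus g -> ~ inGammaTimes (@inP R) g ->
     forall gam, inStab g gam <-> inGamma1 gam) /\
  (forall g : 'M[R]_3, inP2plus g -> ~ inGammaTimes (@inP R) g ->
     forall gam, inStab g gam <-> inGamma2 gam) /\
  (forall g : 'M[R]_3, inSL3 g ->
     ~ inGammaTimes (@inP1 R) g -> ~ inGammaTimes (@inP2 R) g ->
     forall gam, inStab g gam <-> gam = 1%:M).
Proof.
split; first exact: part1.
split; first exact: part2.
split; first exact: part3.
exact: part4.
Qed.
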